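(* In every proper $4$-colouring of $L$, at least one of its $52$ copies of $H$ contains a monochromatic triple.
   Context: Identify $\mathbb{R}^2$ with $\mathbb{C}$. Let $\Lambda=\{a+b e^{i\pi/3}: a,b\in\mathbb{Z}\}$. For $c\in\mathbb{C}$, let $H_c$ be the unit-distance graph on $c$ and $c+e^{i\pi k/3}$, $k=0,\dots,5$. A monochromatic triple in a colouring of a copy of $H$ is a set of three of its $7$ vertices all receiving the same colour. $J$ is the unit-distance graph on the $31$ points of $\Lambda$ of modulus at most $\sqrt7$, i.e. the union of the $13$ copies $H_c$, $c\in\Lambda$, $|c|\le\sqrt3$. Let $R$ be the clockwise rotation about $0$ by $2\arcsin(1/4)$. $K$ is the unit-distance graph on the $61$ points of $V(J)\cup R(V(J))$. It contains the $26$ copies $H_c$ and $R(H_c)$. Let $A=2$ and $B=-2$. Let $\rho$ be the rotation about $A$ by the angle $2\arcsin(1/8)$, so that $B'=\rho(B)$ satisfies $|B-B'|=1$. $L$ is the unit-distance graph on the $121$ points of $V(K)\cup\rho(V(K))$. Its $52$ copies of $H$ are the $26$ copies in $K$ together with their images under $\rho$. *)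

(* Defs.v *)
(* points of the plane C = R^2 as pairs of reals. *)
From Stdlib Require Import Reals Lra Lia ZArith.
Open Scope R_scope.

Definition pt : Type := (R * R)%type.

Definition padd (p q : pt) : pt := (fst p + fst q, snd p + snd q).
Definition psub (p q : pt) : pt := (fst p - fst q, snd p - snd q).
Definition norm2 (p : pt) : R := fst p * fst p + snd p * snd p.

Definition rot (t : R) (p : pt) : pt :=
  (cos t * fst p - sin t * snd p, sin t * fst p + cos t * snd p).

Definition unit6 (k : nat) : pt := (cos (PI * INR k / 3), sin (PI * INR k / 3)).

(* a + b e^{i pi/3} *)
Definition lat (a b : Z) : pt :=
  (IZR a + IZR b * cos (PI / 3), IZR b * sin (PI / 3)).

Definition inLambda (p : pt) : Prop := exists a b : Z, p = lat a b.

(* vertices of H_c: index 0 is c, index k (1..6) is c + e^{i pi (k-1)/3} *)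
Definition Hvert (c : pt) (k : nat) : pt :=
  match k with
  | O => c
  | S j => padd c (unit6 j)
  end.

Definition Rmap (p : pt) : pt := rot (- (2 * asin (1/4))) p.

Definition A : pt := (2, 0).
Definition B : pt := (-2, 0).
Definition rho (p : pt) : pt := padd A (rot (2 * asin (1/8)) (psub p A)).

Definition VJ (p : pt) : Prop := inLambda p /\ norm2 p <= 7.
Definition VK (p : pt) : Prop := VJ p \/ exists q, VJ q /\ p = Rmap q.
Definition VL (p : pt) : Prop := VK p \/ exists q, VK q /\ p = rho q.

Definition unit_dist (p q : pt) : Prop := norm2 (psub p q) = 1.

Definition proper4_L (col : pt -> nat) : Prop :=
  (forall p, VL p -> (col p < 4)%nat) /\
  (forall p q, VL p -> VL q -> unit_dist p q -> col p <> col q).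

Definition placements : list (pt -> pt) :=
  (fun p => p) :: Rmap :: rho :: (fun p => rho (Rmap p)) :: nil.

Definition mono_triple (col : pt -> nat) (T : pt -> pt) (c : pt) : Prop :=
  exists i j k : nat, (i < 7)%nat /\ (j < 7)%nat /\ (k < 7)%nat /\
    i <> j /\ j <> k /\ i <> k /\
    col (T (Hvert c i)) = col (T (Hvert c j)) /\
    col (T (Hvert c j)) = col (T (Hvert c k)).

(* Main.v *)
Require Import Defs.
From Stdlib Require Import Reals List.
Open Scope R_scope.
From Stdlib Require Import Arith Bool ZArith Lia Lra Classical.
Import ListNotations.
Close Scope R_scope.
Open Scope nat_scope.


Inductive constr := CNe (u v : nat) | CGood (l : list nat).

Definition triples : list (nat * nat * nat) := [(0,1,2); (0,1,3); (0,1,4); (0,1,5); (0,1,6); (0,2,3); (0,2,4); (0,2,5); (0,2,6); (0,3,4); (0,3,5); (0,3,6); (0,4,5); (0,4,6); (0,5,6); (1,2,3); (1,2,4); (1,2,5); (1,2,6); (1,3,4); (1,3,5); (1,3,6); (1,4,5); (1,4,6); (1,5,6); (2,3,4); (2,3,5); (2,3,6); (2,4,5); (2,4,6); (2,5,6); (3,4,5); (3,4,6); (3,5,6); (4,5,6)].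

Definition goodg (g : nat -> nat) : bool :=
  forallb (fun t => match t with (i,j,k) =>
    negb ((g i =? g j) && (g j =? g k)) end) triples.

Definition evalc (f : nat -> nat) (k : constr) : bool :=
  match k with
  | CNe u v => negb (f u =? f v)
  | CGood l => let xs := map f l in goodg (fun i => nth i xs 0)
  end.

Definition idxs (k : constr) : list nat :=
  match k with CNe u v => [u; v] | CGood l => 0 :: l end.

Lemma goodg_ext g1 g2 : (forall i, g1 i = g2 i) -> goodg g1 = goodg g2.
Proof.
  intros H; unfold goodg. induction triples as [|[[i j] k] r IH]; simpl; auto.
  rewrite !H, IH; reflexivity.
Qed.

Lemma evalc_agree f1 f2 k :
  (forall i, In i (idxs k) -> f1 i = f2 i) -> evalc f1 k = evalc f2 k.
Proof.
  destruct k as [u v | l]; simpl; intros H.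
  - rewrite (H u), (H v); auto.
  - apply goodg_ext.
    assert (E : map f1 l = map f2 l).
    { apply map_ext_in. intros a Ha. apply H. right; exact Ha. }
    intro i; rewrite E; reflexivity.
Qed.

Lemma firstn_S_nth {A} (F : list A) t d : t < length F -> firstn (S t) F = firstn t F ++ [nth t F d].
Proof.
  revert t; induction F as [|x F IH]; intros t Ht; simpl in *; [lia|].
  destruct t as [|t]; simpl; [reflexivity|]. f_equal. rewrite <- IH by lia. reflexivity.
Qed.


Definition colors (t : nat) : list nat :=
  match t with 0 => [0] | 1 => [1] | 2 => [2] | _ => [0;1;2;3] end.

Fixpoint search (consAt : list (list constr)) (fuel t : nat) (l : list nat) : bool :=
  match fuel with
  | 0 => false
  | S n => forallb (fun c => let l' := l ++ [c] in
             if forallb (evalc (fun i => nth i l' 0)) (nth t consAt nil)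
             then search consAt n (S t) l' else true) (colors t)
  end.

Definition wf_cons (consAt : list (list constr)) (N : nat) : bool :=
  forallb (fun t => forallb (fun k => forallb (fun i => i <=? t) (idxs k)) (nth t consAt nil))
    (seq 0 N).

Lemma search_sound (consAt : list (list constr)) (N : nat) (F : list nat) :
  length F = N ->
  wf_cons consAt N = true ->
  (forall i, i < N -> In (nth i F 0) (colors i)) ->
  (forall t k, t < N -> In k (nth t consAt nil) -> evalc (fun i => nth i F 0) k = true) ->
  forall fuel t, t + fuel = N -> search consAt fuel t (firstn t F) = true -> False.
Proof.
  intros HL Hwf Hcol Hc. induction fuel as [|n IH]; intros t Ht Hs.
  - simpl in Hs; discriminate.
  - simpl in Hs. assert (Htn : t < N) by lia.
    pose proof (proj1 (forallb_forall _ _) Hs (nth t F 0) (Hcol t Htn)) as H1.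
    simpl in H1.
    assert (Efs : firstn t F ++ [nth t F 0] = firstn (S t) F).
    { symmetry; apply firstn_S_nth; lia. }
    rewrite Efs in H1.
    destruct (forallb _ (nth t consAt nil)) eqn:H2 in H1.
    + apply (IH (S t)); auto; lia.
    + clear H1; rename H2 into H1.
      assert (forallb (evalc (fun i => nth i (firstn (S t) F) 0)) (nth t consAt nil) = true).
      { apply forallb_forall. intros k Hk.
        rewrite (evalc_agree _ (fun i => nth i F 0)).
        - apply (Hc t); auto.
        - intros i Hi. unfold wf_cons in Hwf.
          pose proof (proj1 (forallb_forall _ _) Hwf t) as Ht'.
          assert (In t (seq 0 N)) by (apply in_seq; lia).
          specialize (Ht' H).
          pose proof (proj1 (forallb_forall _ _) Ht' k Hk) as Hk'.
          pose proof (proj1 (forallb_forall _ _) Hk' i Hi) as Hi'.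
          apply Nat.leb_le in Hi'.
          rewrite nth_firstn. destruct (Nat.ltb_spec i (S t)); [reflexivity| lia]. }
      congruence.
Qed.

Definition tbl : list (bool * Z * Z) := [(false, (0)%Z, (0)%Z); (false, (-1)%Z, (0)%Z); (false, (-1)%Z, (1)%Z); (false, (0)%Z, (-1)%Z); (false, (0)%Z, (1)%Z); (false, (1)%Z, (-1)%Z); (false, (1)%Z, (0)%Z); (true, (-1)%Z, (0)%Z); (true, (-1)%Z, (1)%Z); (true, (0)%Z, (-1)%Z); (true, (0)%Z, (1)%Z); (true, (1)%Z, (-1)%Z); (true, (1)%Z, (0)%Z); (false, (-2)%Z, (0)%Z); (false, (-2)%Z, (1)%Z); (false, (-1)%Z, (-1)%Z); (false, (-2)%Z, (2)%Z); (false, (-1)%Z, (2)%Z); (false, (0)%Z, (-2)%Z); (false, (1)%Z, (-2)%Z); (false, (0)%Z, (2)%Z); (false, (1)%Z, (1)%Z); (false, (2)%Z, (-2)%Z); (false, (2)%Z, (-1)%Z); (false, (2)%Z, (0)%Z); (true, (-2)%Z, (0)%Z); (true, (-2)%Z, (1)%Z); (true, (-1)%Z, (-1)%Z); (true, (-2)%Z, (2)%Z); (true, (-1)%Z, (2)%Z); (true, (0)%Z, (-2)%Z); (true, (1)%Z, (-2)%Z); (true, (0)%Z, (2)%Z); (true, (1)%Z, (1)%Z); (true, (2)%Z, (-2)%Z); (true, (2)%Z, (-1)%Z); (true, (2)%Z, (0)%Z); (false, (-3)%Z, (1)%Z); (false, (-2)%Z, (-1)%Z); (false, (-3)%Z,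 (2)%Z); (false, (-1)%Z, (-2)%Z); (false, (-2)%Z, (3)%Z); (false, (-1)%Z, (3)%Z); (false, (1)%Z, (-3)%Z); (false, (2)%Z, (-3)%Z); (false, (1)%Z, (2)%Z); (false, (2)%Z, (1)%Z); (false, (3)%Z, (-2)%Z); (false, (3)%Z, (-1)%Z); (true, (-3)%Z, (1)%Z); (true, (-2)%Z, (-1)%Z); (true, (-3)%Z, (2)%Z); (true, (-1)%Z, (-2)%Z); (true, (-2)%Z, (3)%Z); (true, (-1)%Z, (3)%Z); (true, (1)%Z, (-3)%Z); (true, (2)%Z, (-3)%Z); (true, (1)%Z, (2)%Z); (true, (2)%Z, (1)%Z); (true, (3)%Z, (-2)%Z); (true, (3)%Z, (-1)%Z)].
Definition EK : list (nat * nat) := [(0, 1); (0, 2); (0, 3); (0, 4); (0, 5); (0, 6); (0, 7); (0, 8); (0, 9); (0, 10); (0, 11); (0, 12); (1, 2); (1, 3); (1, 13); (1, 14); (1, 15); (2, 4); (2, 14); (2, 16); (2, 17); (3, 5); (3, 15); (3, 18); (3, 19); (4, 6); (4, 17); (4, 20); (4, 21); (5, 6); (5, 19); (5, 22); (5, 23); (6, 21); (6, 23); (6, 24); (7, 8); (7, 9); (7, 25); (7, 26); (7, 27); (8, 10); (8, 26); (8, 28); (8, 29); (9, 11); (9, 27); (9, 30); (9, 31); (10, 12); (10, 29); (10, 32); (10, 33); (11, 12); (11, 31); (11, 34); (11, 35); (12, 33); (12, 35); (12, 36); (13, 14); (13, 15); (13, 25); (13, 37); (13, 38); (14, 16); (14,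 37); (14, 39); (15, 18); (15, 38); (15, 40); (16, 17); (16, 28); (16, 39); (16, 41); (17, 20); (17, 41); (17, 42); (18, 19); (18, 30); (18, 40); (18, 43); (19, 22); (19, 43); (19, 44); (20, 21); (20, 32); (20, 42); (20, 45); (21, 24); (21, 45); (21, 46); (22, 23); (22, 34); (22, 44); (22, 47); (23, 24); (23, 47); (23, 48); (24, 36); (24, 46); (24, 48); (25, 26); (25, 27); (25, 49); (25, 50); (26, 28); (26, 49); (26, 51); (27, 30); (27, 50); (27, 52); (28, 29); (28, 51); (28, 53); (29, 32); (29, 53); (29, 54); (30, 31); (30, 52); (30, 55); (31, 34); (31, 55); (31, 56); (32, 33); (32, 54); (32, 57); (33, 36); (33, 57); (33, 58); (34, 35); (34, 56); (34, 59); (35, 36); (35, 59); (35, 60); (36, 58); (36, 60); (37, 39); (38, 40); (41, 42); (43, 44); (45, 46); (47, 48); (49, 51); (50, 52); (53, 54); (55, 56); (57, 58); (59, 60)].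
Definition CPdata : list (bool * Z * Z * list nat) := [(false, (-2)%Z, (1)%Z, [14; 2; 16; 39; 37; 13; 1]); (false, (-1)%Z, (-1)%Z, [15; 3; 1; 13; 38; 40; 18]); (false, (-1)%Z, (0)%Z, [1; 0; 2; 14; 13; 15; 3]); (false, (-1)%Z, (1)%Z, [2; 4; 17; 16; 14; 1; 0]); (false, (-1)%Z, (2)%Z, [17; 20; 42; 41; 16; 2; 4]); (false, (0)%Z, (-1)%Z, [3; 5; 0; 1; 15; 18; 19]); (false, (0)%Z, (0)%Z, [0; 6; 4; 2; 1; 3; 5]); (false, (0)%Z, (1)%Z, [4; 21; 20; 17; 2; 0; 6]); (false, (1)%Z, (-2)%Z, [19; 22; 5; 3; 18; 43; 44]); (false, (1)%Z, (-1)%Z, [5; 23; 6; 0; 3; 19; 22]); (false, (1)%Z, (0)%Z, [6; 24; 21; 4; 0; 5; 23]); (false, (1)%Z, (1)%Z, [21; 46; 45; 20; 4; 6; 24]); (false, (2)%Z, (-1)%Z, [23; 48; 24; 6; 5; 22; 47]); (true, (-2)%Z, (1)%Z, [26; 8; 28; 51; 49; 25; 7]); (true, (-1)%Z, (-1)%Z, [27; 9; 7; 25; 50; 52; 30]); (true, (-1)%Z, (0)%Z, [7; 0; 8; 26; 25; 27; 9]); (true, (-1)%Z, (1)%Z, [8; 10; 29; 28; 26; 7; 0]); (true, (-1)%Z, (2)%Z, [29; 32; 54; 53; 28; 8; 10]); (true, (0)%Z, (-1)%Z, [9; 11; 0; 7; 27; 30; 31]); (true, (0)%Z, (0)%Z,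 [0; 12; 10; 8; 7; 9; 11]); (true, (0)%Z, (1)%Z, [10; 33; 32; 29; 8; 0; 12]); (true, (1)%Z, (-2)%Z, [31; 34; 11; 9; 30; 55; 56]); (true, (1)%Z, (-1)%Z, [11; 35; 12; 0; 9; 31; 34]); (true, (1)%Z, (0)%Z, [12; 36; 33; 10; 0; 11; 35]); (true, (1)%Z, (1)%Z, [33; 58; 57; 32; 10; 12; 36]); (true, (2)%Z, (-1)%Z, [35; 60; 36; 12; 11; 34; 59])].
Definition iA : nat := 24.
Definition iB : nat := 13.
Definition consAt : list (list constr) := [[];
 [CNe 0 1];
 [CNe 0 2; CNe 1 2];
 [CNe 0 3; CNe 1 3];
 [CNe 0 4; CNe 2 4];
 [CNe 0 5; CNe 3 5];
 [CNe 0 6; CNe 4 6; CNe 5 6; CGood [0; 6; 4; 2; 1; 3; 5]];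
 [CNe 0 7];
 [CNe 0 8; CNe 7 8];
 [CNe 0 9; CNe 7 9];
 [CNe 0 10; CNe 8 10];
 [CNe 0 11; CNe 9 11];
 [CNe 0 12; CNe 10 12; CNe 11 12; CGood [0; 12; 10; 8; 7; 9; 11]];
 [CNe 1 13];
 [CNe 1 14; CNe 2 14; CNe 13 14];
 [CNe 1 15; CNe 3 15; CNe 13 15; CGood [1; 0; 2; 14; 13; 15; 3]];
 [CNe 2 16; CNe 14 16];
 [CNe 2 17; CNe 4 17; CNe 16 17; CGood [2; 4; 17; 16; 14; 1; 0]];
 [CNe 3 18; CNe 15 18];
 [CNe 3 19; CNe 5 19; CNe 18 19; CGood [3; 5; 0; 1; 15; 18; 19]];
 [CNe 4 20; CNe 17 20];
 [CNe 4 21; CNe 6 21; CNe 20 21; CGood [4; 21; 20; 17; 2; 0; 6]];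
 [CNe 5 22; CNe 19 22];
 [CNe 5 23; CNe 6 23; CNe 22 23; CGood [5; 23; 6; 0; 3; 19; 22]];
 [CNe 6 24; CNe 21 24; CNe 23 24; CGood [6; 24; 21; 4; 0; 5; 23]; CNe 13 24];
 [CNe 7 25; CNe 13 25];
 [CNe 7 26; CNe 8 26; CNe 25 26];
 [CNe 7 27; CNe 9 27; CNe 25 27; CGood [7; 0; 8; 26; 25; 27; 9]];
 [CNe 8 28; CNe 16 28; CNe 26 28];
 [CNe 8 29; CNe 10 29; CNe 28 29; CGood [8; 10; 29; 28; 26; 7; 0]];
 [CNe 9 30; CNe 18 30; CNe 27 30];
 [CNe 9 31; CNe 11 31; CNe 30 31; CGood [9; 11; 0; 7; 27; 30; 31]];
 [CNe 10 32; CNe 20 32; CNe 29 32];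
 [CNe 10 33; CNe 12 33; CNe 32 33; CGood [10; 33; 32; 29; 8; 0; 12]];
 [CNe 11 34; CNe 22 34; CNe 31 34];
 [CNe 11 35; CNe 12 35; CNe 34 35; CGood [11; 35; 12; 0; 9; 31; 34]];
 [CNe 12 36; CNe 24 36; CNe 33 36; CNe 35 36; CGood [12; 36; 33; 10; 0; 11; 35]];
 [CNe 13 37; CNe 14 37];
 [CNe 13 38; CNe 15 38];
 [CNe 14 39; CNe 16 39; CNe 37 39; CGood [14; 2; 16; 39; 37; 13; 1]];
 [CNe 15 40; CNe 18 40; CNe 38 40; CGood [15; 3; 1; 13; 38; 40; 18]];
 [CNe 16 41; CNe 17 41];
 [CNe 17 42; CNe 20 42; CNe 41 42; CGood [17; 20; 42; 41; 16; 2; 4]];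
 [CNe 18 43; CNe 19 43];
 [CNe 19 44; CNe 22 44; CNe 43 44; CGood [19; 22; 5; 3; 18; 43; 44]];
 [CNe 20 45; CNe 21 45];
 [CNe 21 46; CNe 24 46; CNe 45 46; CGood [21; 46; 45; 20; 4; 6; 24]];
 [CNe 22 47; CNe 23 47];
 [CNe 23 48; CNe 24 48; CNe 47 48; CGood [23; 48; 24; 6; 5; 22; 47]];
 [CNe 25 49; CNe 26 49];
 [CNe 25 50; CNe 27 50];
 [CNe 26 51; CNe 28 51; CNe 49 51; CGood [26; 8; 28; 51; 49; 25; 7]];
 [CNe 27 52; CNe 30 52; CNe 50 52; CGood [27; 9; 7; 25; 50; 52; 30]];
 [CNe 28 53; CNe 29 53];
 [CNe 29 54; CNe 32 54; CNe 53 54; CGood [29; 32; 54; 53; 28; 8; 10]];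
 [CNe 30 55; CNe 31 55];
 [CNe 31 56; CNe 34 56; CNe 55 56; CGood [31; 34; 11; 9; 30; 55; 56]];
 [CNe 32 57; CNe 33 57];
 [CNe 33 58; CNe 36 58; CNe 57 58; CGood [33; 58; 57; 32; 10; 12; 36]];
 [CNe 34 59; CNe 35 59];
 [CNe 35 60; CNe 36 60; CNe 59 60; CGood [35; 60; 36; 12; 11; 34; 59]]].

Definition allcons : list constr :=
  CNe iB iA :: map (fun e => CNe (fst e) (snd e)) EK ++
  map (fun x => match x with (_,_,_,l) => CGood l end) CPdata.

Definition constr_dec (x y : constr) : {x = y} + {x <> y}.
Proof. decide equality; try apply Nat.eq_dec. apply list_eq_dec, Nat.eq_dec. Defined.

Definition inb (k : constr) (l : list constr) : bool :=
  existsb (fun k' => if constr_dec k k' then true else false) l.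

Lemma inb_In k l : inb k l = true -> In k l.
Proof.
  unfold inb; intro H; apply existsb_exists in H. destruct H as [k' [Hk Hd]].
  destruct (constr_dec k k'); [subst; auto | discriminate].
Qed.

Definition cons_shape (k : constr) : bool :=
  forallb (fun i => i <? 61) (idxs k) &&
  match k with CGood l => length l =? 7 | _ => true end.

Lemma allcons_shape : forallb cons_shape allcons = true.
Proof. vm_compute. reflexivity. Qed.

Lemma consAt_sub : forallb (fun t => forallb (fun k => inb k allcons) (nth t consAt nil)) (seq 0 61) = true.
Proof. vm_compute. reflexivity. Qed.

Lemma wf_ok : wf_cons consAt 61 = true.
Proof. vm_compute. reflexivity. Qed.

Lemma search_ok : search consAt 61 0 [] = true.
Proof. vm_compute. reflexivity. Qed.

Definition pi (a b c x : nat) : nat :=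
  if x =? a then 0 else if x =? b then 1 else if x =? c then 2 else 3.

Lemma lt4 n : n < 4 -> n = 0 \/ n = 1 \/ n = 2 \/ n = 3.
Proof. lia. Qed.

Lemma pi_eqb a b c x y : a < 4 -> b < 4 -> c < 4 -> a <> b -> a <> c -> b <> c ->
  x < 4 -> y < 4 -> (pi a b c x =? pi a b c y) = (x =? y).
Proof.
  intros Ha Hb Hc Hab Hac Hbc Hx Hy.
  destruct (lt4 _ Ha) as [ -> | [ -> | [ -> | -> ]]];
  destruct (lt4 _ Hb) as [ -> | [ -> | [ -> | -> ]]];
  destruct (lt4 _ Hc) as [ -> | [ -> | [ -> | -> ]]];
  try (exfalso; congruence);
  destruct (lt4 _ Hx) as [ -> | [ -> | [ -> | -> ]]];
  destruct (lt4 _ Hy) as [ -> | [ -> | [ -> | -> ]]]; reflexivity.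
Qed.

Lemma pi_lt4 a b c x : pi a b c x < 4.
Proof. unfold pi. destruct (x =? a), (x =? b), (x =? c); lia. Qed.

Lemma goodg_ext2 g1 g2 : (forall i j, i < 7 -> j < 7 -> (g1 i =? g1 j) = (g2 i =? g2 j)) ->
  goodg g1 = goodg g2.
Proof.
  intros H; unfold goodg.
  assert (Ht : forall i j k, In (i,j,k) triples -> i < 7 /\ j < 7 /\ k < 7).
  { intros i j k Hin. unfold triples in Hin. simpl in Hin.
    repeat (destruct Hin as [Hin|Hin]; [inversion Hin; subst; lia|]). contradiction. }
  revert Ht. induction triples as [|[[i j] k] r IH]; intros Ht; simpl; auto.
  destruct (Ht i j k (or_introl eq_refl)) as [? [? ?]].
  rewrite (H i j), (H j k) by auto. rewrite IH; auto.
  intros; apply (Ht i0 j0 k0); right; auto.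
Qed.

Lemma nth_map0 (f : nat -> nat) l i : i < length l -> nth i (map f l) 0 = f (nth i l 0).
Proof.
  intro H. rewrite (nth_indep _ 0 (f 0)) by (rewrite length_map; auto).
  apply map_nth.
Qed.

Theorem comb_main (f : nat -> nat) :
  (forall i, i < 61 -> f i < 4) -> (forall k, In k allcons -> evalc f k = true) -> False.
Proof.
  intros Hr Hc.
  assert (E01 : f 0 <> f 1).
  { pose proof (Hc (CNe 0 1) ltac:(apply inb_In; vm_compute; reflexivity)) as H; simpl in H.
    intro E; rewrite E, Nat.eqb_refl in H; discriminate. }
  assert (E02 : f 0 <> f 2).
  { pose proof (Hc (CNe 0 2) ltac:(apply inb_In; vm_compute; reflexivity)) as H; simpl in H.
    intro E; rewrite E, Nat.eqb_refl in H; discriminate. }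
  assert (E12 : f 1 <> f 2).
  { pose proof (Hc (CNe 1 2) ltac:(apply inb_In; vm_compute; reflexivity)) as H; simpl in H.
    intro E; rewrite E, Nat.eqb_refl in H; discriminate. }
  assert (H0 := Hr 0 ltac:(lia)). assert (H1 := Hr 1 ltac:(lia)). assert (H2 := Hr 2 ltac:(lia)).
  set (g := fun i => pi (f 0) (f 1) (f 2) (f i)).
  assert (Hg : forall k, In k allcons -> evalc g k = true).
  { intros k Hk. rewrite <- (Hc k Hk).
    pose proof (proj1 (forallb_forall _ _) allcons_shape k Hk) as Hs.
    unfold cons_shape in Hs. apply andb_true_iff in Hs. destruct Hs as [Hi Hl].
    assert (Hi' : forall i, In i (idxs k) -> f i < 4).
    { intros i Hin. apply Hr. pose proof (proj1 (forallb_forall _ _) Hi i Hin) as X.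
      apply Nat.ltb_lt in X; exact X. }
    destruct k as [u v | l]; simpl.
    - unfold g. rewrite pi_eqb; auto; apply Hi'; simpl; auto.
    - apply goodg_ext2. intros i j Hi7 Hj7. apply Nat.eqb_eq in Hl.
      rewrite !nth_map0 by lia. unfold g. apply pi_eqb; auto; apply Hi'; right; apply nth_In; lia. }
  set (F := map g (seq 0 61)).
  assert (HF : forall i, i < 61 -> nth i F 0 = g i).
  { intros i Hi. unfold F. rewrite nth_map0 by (rewrite length_seq; auto).
    rewrite seq_nth by auto. reflexivity. }
  apply (search_sound consAt 61 F (ltac:(unfold F; rewrite length_map, length_seq; reflexivity)) wf_ok)
    with (fuel := 61) (t := 0); [| | reflexivity | exact search_ok].
  - intros i Hi. rewrite HF by auto. unfold g, pi.
    destruct i as [|[|[|i]]]; simpl.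
    + rewrite Nat.eqb_refl; auto.
    + rewrite (proj2 (Nat.eqb_neq _ _) (not_eq_sym E01)), Nat.eqb_refl; auto.
    + rewrite (proj2 (Nat.eqb_neq _ _) (not_eq_sym E02)), (proj2 (Nat.eqb_neq _ _) (not_eq_sym E12)), Nat.eqb_refl; auto.
    + destruct (f (S (S (S i))) =? f 0), (f (S (S (S i))) =? f 1), (f (S (S (S i))) =? f 2); simpl; tauto.
  - intros t k Ht Hk.
    assert (Hka : In k allcons).
    { apply inb_In. pose proof (proj1 (forallb_forall _ _) consAt_sub t ltac:(apply in_seq; lia)) as X.
      exact (proj1 (forallb_forall _ _) X k Hk). }
    rewrite (evalc_agree _ g). apply Hg; auto.
    intros i Hi. apply HF.
    pose proof (proj1 (forallb_forall _ _) allcons_shape k Hka) as Hs.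
    apply andb_true_iff in Hs. destruct Hs as [Hs _].
    apply Nat.ltb_lt. exact (proj1 (forallb_forall _ _) Hs i Hi).
Qed.

Open Scope R_scope.


Lemma s3_sq : sin (PI/3) * sin (PI/3) = 3/4.
Proof.
  rewrite sin_PI3. replace (sqrt 3 / 2 * (sqrt 3 / 2)) with (sqrt 3 * sqrt 3 / 4) by field.
  rewrite sqrt_sqrt by lra. field.
Qed.

Lemma cosPI_x x : cos (PI - x) = - cos x.
Proof. rewrite cos_minus, cos_PI, sin_PI. ring. Qed.

Definition dU (j : nat) : Z * Z :=
  match j with 0%nat => (1%Z,0%Z) | 1%nat => (0%Z,1%Z) | 2%nat => ((-1)%Z,1%Z)
  | 3%nat => ((-1)%Z,0%Z) | 4%nat => (0%Z,(-1)%Z) | _ => (1%Z,(-1)%Z) end.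

Lemma unit6_val j : (j < 6)%nat ->
  unit6 j = (IZR (fst (dU j)) + IZR (snd (dU j)) * (1/2), IZR (snd (dU j)) * sin (PI/3)).
Proof.
  intro Hj. unfold unit6.
  destruct j as [|[|[|[|[|[|j]]]]]]; try lia; simpl fst; simpl snd.
  - replace (INR 0) with 0 by (simpl; ring). replace (PI * 0 / 3) with 0 by field. rewrite cos_0, sin_0. f_equal; lra.
  - replace (INR 1) with 1 by (simpl; ring). replace (PI * 1 / 3) with (PI/3) by field. rewrite cos_PI3. f_equal; lra.
  - replace (INR 2) with 2 by (simpl; ring). replace (PI * 2 / 3) with (PI - PI/3) by field.
    rewrite cosPI_x, sin_PI_x, cos_PI3. f_equal; lra.
  - replace (INR 3) with 3 by (simpl; ring). replace (PI * 3 / 3) with PI by field. rewrite cos_PI, sin_PI. f_equal; lra.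
  - replace (INR 4) with 4 by (simpl; ring). replace (PI * 4 / 3) with (PI/3 + PI) by field.
    rewrite neg_cos, neg_sin, cos_PI3. f_equal; lra.
  - replace (INR 5) with 5 by (simpl; ring). replace (PI * 5 / 3) with ((PI - PI/3) + PI) by field.
    rewrite neg_cos, neg_sin, cosPI_x, sin_PI_x, cos_PI3. f_equal; lra.
Qed.

Lemma Hvert_lat a b j : (j < 6)%nat ->
  Hvert (lat a b) (S j) = lat (a + fst (dU j)) (b + snd (dU j)).
Proof.
  intro Hj. simpl Hvert. rewrite unit6_val by auto. unfold lat, padd; simpl fst; simpl snd.
  rewrite cos_PI3, !plus_IZR. f_equal; field.
Qed.

Definition nz (a b : Z) : Z := (a*a + a*b + b*b)%Z.

Lemma norm_lat a b : norm2 (lat a b) = IZR (nz a b).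
Proof.
  unfold norm2, lat, nz; simpl fst; simpl snd. rewrite cos_PI3, !plus_IZR, !mult_IZR.
  replace (IZR b * sin (PI / 3) * (IZR b * sin (PI / 3))) with (IZR b * IZR b * (sin (PI/3) * sin (PI/3))) by ring.
  rewrite s3_sq. field.
Qed.

Lemma psub_lat a1 b1 a2 b2 : psub (lat a1 b1) (lat a2 b2) = lat (a1 - a2) (b1 - b2).
Proof. unfold psub, lat; simpl fst; simpl snd. rewrite !minus_IZR. f_equal; ring. Qed.

Lemma rot_psub t p q : psub (rot t p) (rot t q) = rot t (psub p q).
Proof. unfold psub, rot; simpl. f_equal; ring. Qed.

Lemma norm_rot t p : norm2 (rot t p) = norm2 p.
Proof.
  unfold norm2, rot; simpl.
  pose proof (sin2_cos2 t) as H. unfold Rsqr in H.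
  replace ((cos t * fst p - sin t * snd p) * (cos t * fst p - sin t * snd p) +
    (sin t * fst p + cos t * snd p) * (sin t * fst p + cos t * snd p))
   with ((sin t * sin t + cos t * cos t) * (fst p * fst p + snd p * snd p)) by ring.
  rewrite H. ring.
Qed.

Lemma norm_sub_rot t p : norm2 (psub p (rot t p)) = (2 - 2 * cos t) * norm2 p.
Proof.
  unfold norm2, psub, rot; simpl.
  pose proof (sin2_cos2 t) as H. unfold Rsqr in H.
  match goal with |- ?L = _ => replace L with (((1 - cos t) * (1 - cos t) + sin t * sin t) * (fst p * fst p + snd p * snd p)) by ring end.
  replace (sin t * sin t) with (1 - cos t * cos t) by lra. ring.
Qed.

Lemma cosR : cos (- (2 * asin (1/4))) = 7/8.
Proof. rewrite cos_neg, cos_2a_sin, sin_asin by lra. field. Qed.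

Lemma cosrho : cos (2 * asin (1/8)) = 31/32.
Proof. rewrite cos_2a_sin, sin_asin by lra. field. Qed.

Lemma unit_dist_sym p q : unit_dist p q -> unit_dist q p.
Proof. unfold unit_dist, norm2, psub; simpl. intro H; rewrite <- H; ring. Qed.

Lemma Rmap_origin : Rmap (lat 0 0) = lat 0 0.
Proof. unfold Rmap, rot, lat; simpl. f_equal; ring. Qed.

Lemma unit_dist_rot t p q : unit_dist p q -> unit_dist (rot t p) (rot t q).
Proof. unfold unit_dist; intro H. rewrite rot_psub, norm_rot; auto. Qed.

Lemma unit_dist_rho p q : unit_dist p q -> unit_dist (rho p) (rho q).
Proof.
  unfold unit_dist, rho; intro H.
  replace (psub (padd A (rot (2 * asin (1 / 8)) (psub p A))) (padd A (rot (2 * asin (1 / 8)) (psub q A))))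
    with (rot (2 * asin (1/8)) (psub p q)).
  - rewrite norm_rot; auto.
  - unfold padd, psub, rot; simpl. f_equal; ring.
Qed.

Lemma unit_dist_lat a1 b1 a2 b2 : nz (a1 - a2) (b1 - b2) = 1%Z -> unit_dist (lat a1 b1) (lat a2 b2).
Proof. intro H. unfold unit_dist. rewrite psub_lat, norm_lat, H. reflexivity. Qed.

Lemma unit_dist_cross a b : nz a b = 4%Z -> unit_dist (lat a b) (Rmap (lat a b)).
Proof.
  intro H. unfold unit_dist, Rmap. rewrite norm_sub_rot, cosR, norm_lat, H. simpl. field.
Qed.

Lemma rhoA : rho A = A.
Proof. unfold rho, A, padd, psub, rot; simpl. f_equal; ring. Qed.

Lemma unit_dist_B : unit_dist B (rho B).
Proof.
  unfold unit_dist, rho.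
  replace (psub B (padd A (rot (2 * asin (1 / 8)) (psub B A))))
    with (psub (psub B A) (rot (2 * asin (1 / 8)) (psub B A))).
  - rewrite norm_sub_rot, cosrho. unfold norm2, psub, A, B; simpl. field.
  - unfold padd, psub, rot, A, B; simpl. f_equal; ring.
Qed.

Definition dflt : bool * Z * Z := (false, 0%Z, 0%Z).
Definition P (v : nat) : pt :=
  match nth v tbl dflt with (k, a, b) => if k then Rmap (lat a b) else lat a b end.
Definition Tk (k : bool) (p : pt) : pt := if k then Rmap p else p.

Definition matchb (e : bool * Z * Z) (k : bool) (a b : Z) : bool :=
  match e with (k', a', b') =>
    (Bool.eqb k k' && Z.eqb a a' && Z.eqb b b') ||
    (Z.eqb a 0 && Z.eqb b 0 && negb k' && Z.eqb a' 0 && Z.eqb b' 0) end.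

Lemma Tk_origin k : Tk k (lat 0 0) = lat 0 0.
Proof. destruct k; [apply Rmap_origin | reflexivity]. Qed.

Lemma matchb_sound v k a b : matchb (nth v tbl dflt) k a b = true -> Tk k (lat a b) = P v.
Proof.
  unfold P. destruct (nth v tbl dflt) as [[k' a'] b']. simpl. intro H.
  apply orb_true_iff in H. destruct H as [H|H].
  - apply andb_true_iff in H as [H H3]. apply andb_true_iff in H as [H1 H2].
    apply Bool.eqb_prop in H1. apply Z.eqb_eq in H2. apply Z.eqb_eq in H3. subst.
    destruct k'; reflexivity.
  - apply andb_true_iff in H as [H H5]. apply andb_true_iff in H as [H H4].
    apply andb_true_iff in H as [H H3]. apply andb_true_iff in H as [H1 H2].
    apply Z.eqb_eq in H1, H2, H4, H5. apply negb_true_iff in H3. subst.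
    rewrite Tk_origin. reflexivity.
Qed.

Definition copy_okb (x : bool * Z * Z * list nat) : bool :=
  match x with (k, a, b, l) =>
    (length l =? 7)%nat && (nz a b <=? 3)%Z && matchb (nth (nth 0 l 0%nat) tbl dflt) k a b &&
    forallb (fun j => matchb (nth (nth (S j) l 0%nat) tbl dflt) k (a + fst (dU j)) (b + snd (dU j)))
      (seq 0 6) end.

Lemma copies_ok : forallb copy_okb CPdata = true.
Proof. vm_compute. reflexivity. Qed.

Lemma copy_sound k a b l : copy_okb (k, a, b, l) = true ->
  forall i, (i < 7)%nat -> Tk k (Hvert (lat a b) i) = P (nth i l 0%nat).
Proof.
  intros H i Hi. cbv beta iota delta [copy_okb] in H.
  apply andb_true_iff in H as [H H4]. apply andb_true_iff in H as [H H3].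
  destruct i as [|j].
  - apply matchb_sound; exact H3.
  - rewrite Hvert_lat by lia. apply matchb_sound.
    apply (proj1 (forallb_forall _ _) H4 j). apply in_seq; lia.
Qed.

Definition edge_okb (e : nat * nat) : bool :=
  match e with (u, v) =>
  match nth u tbl dflt, nth v tbl dflt with (k1, a1, b1), (k2, a2, b2) =>
    if Bool.eqb k1 k2 then Z.eqb (nz (a1 - a2) (b1 - b2)) 1
    else (Z.eqb a1 a2 && Z.eqb b1 b2 && Z.eqb (nz a1 b1) 4) ||
         (Z.eqb a1 0 && Z.eqb b1 0 && Z.eqb (nz (a1 - a2) (b1 - b2)) 1) ||
         (Z.eqb a2 0 && Z.eqb b2 0 && Z.eqb (nz (a1 - a2) (b1 - b2)) 1)
  end end.

Lemma edges_ok : forallb edge_okb EK = true.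
Proof. vm_compute. reflexivity. Qed.

Lemma same_kind k a1 b1 a2 b2 : nz (a1 - a2) (b1 - b2) = 1%Z ->
  unit_dist (Tk k (lat a1 b1)) (Tk k (lat a2 b2)).
Proof.
  intro H. destruct k; simpl.
  - apply unit_dist_rot, unit_dist_lat; auto.
  - apply unit_dist_lat; auto.
Qed.

Lemma P_Tk v : P v = match nth v tbl dflt with (k, a, b) => Tk k (lat a b) end.
Proof. unfold P. destruct (nth v tbl dflt) as [[k a] b]. reflexivity. Qed.

Lemma edge_sound u v : edge_okb (u, v) = true -> unit_dist (P u) (P v).
Proof.
  unfold edge_okb. rewrite !P_Tk.
  destruct (nth u tbl dflt) as [[k1 a1] b1]. destruct (nth v tbl dflt) as [[k2 a2] b2].
  destruct (Bool.eqb k1 k2) eqn:Ek.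
  - apply Bool.eqb_prop in Ek. subst. intro H. apply Z.eqb_eq in H. apply same_kind; auto.
  - intro H. apply orb_true_iff in H as [H|H]; [apply orb_true_iff in H as [H|H]|].
    + apply andb_true_iff in H as [H H3]. apply andb_true_iff in H as [H1 H2].
      apply Z.eqb_eq in H1, H2, H3. subst.
      destruct k1, k2; simpl in Ek; try discriminate; simpl.
      * apply unit_dist_sym, unit_dist_cross; auto.
      * apply unit_dist_cross; auto.
    + apply andb_true_iff in H as [H H3]. apply andb_true_iff in H as [H1 H2].
      apply Z.eqb_eq in H1, H2, H3. subst.
      rewrite Tk_origin, <- (Tk_origin k2). apply same_kind; auto.
    + apply andb_true_iff in H as [H H3]. apply andb_true_iff in H as [H1 H2].
      apply Z.eqb_eq in H1, H2, H3. subst.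
      rewrite (Tk_origin k2), <- (Tk_origin k1). apply same_kind; auto.
Qed.

Lemma verts_ok : forallb (fun e => match e with (_, a, b) => Z.leb (nz a b) 7 end) tbl = true.
Proof. vm_compute. reflexivity. Qed.

Lemma VJ_lat a b : (nz a b <= 7)%Z -> VJ (lat a b).
Proof.
  intro H. split.
  - exists a, b; reflexivity.
  - rewrite norm_lat. apply IZR_le in H. exact H.
Qed.

Lemma VK_P v : VK (P v).
Proof.
  destruct (nth v tbl dflt) as [[k a] b] eqn:E.
  assert (H : (nz a b <=? 7)%Z = true).
  { destruct (nth_in_or_default v tbl dflt) as [Hi|Hi].
    - rewrite E in Hi. exact (proj1 (forallb_forall _ _) verts_ok _ Hi).
    - rewrite E in Hi. inversion Hi; reflexivity. }
  unfold P. rewrite E. apply Z.leb_le in H.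
  destruct k.
  - right. exists (lat a b). split; [apply VJ_lat; auto | reflexivity].
  - left. apply VJ_lat; auto.
Qed.

Lemma goodg_of_nomono (g : nat -> nat) :
  ~ (exists i j k, (i < 7)%nat /\ (j < 7)%nat /\ (k < 7)%nat /\ i <> j /\ j <> k /\ i <> k /\
       g i = g j /\ g j = g k) -> goodg g = true.
Proof.
  intro H. unfold goodg. apply forallb_forall. intros [[i j] k] Hin.
  assert (Ht : (i < j)%nat /\ (j < k)%nat /\ (k < 7)%nat).
  { unfold triples in Hin. simpl in Hin.
    repeat (destruct Hin as [Hin|Hin]; [inversion Hin; subst; lia|]). contradiction. }
  destruct ((g i =? g j) && (g j =? g k))%nat eqn:E; [|reflexivity].
  exfalso. apply H. apply andb_true_iff in E as [E1 E2]. apply Nat.eqb_eq in E1, E2.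
  exists i, j, k. repeat split; auto; lia.
Qed.

Lemma f_const (col : pt -> nat)
  (Hlt : forall p, VL p -> (col p < 4)%nat)
  (Hadj : forall p q, VL p -> VL q -> unit_dist p q -> col p <> col q)
  (Tf : pt -> pt) (HT1 : In Tf placements) (HT2 : In (fun p => Tf (Rmap p)) placements)
  (HVL : forall p, VK p -> VL (Tf p))
  (Hud : forall p q, unit_dist p q -> unit_dist (Tf p) (Tf q))
  (Hno : forall T c, In T placements -> inLambda c -> norm2 c <= 3 -> ~ mono_triple col T c) :
  col (Tf (P iA)) = col (Tf (P iB)).
Proof.
  set (f := fun v => col (Tf (P v))).
  destruct (Nat.eq_dec (f iA) (f iB)) as [E|E]; [exact E|exfalso].
  apply (comb_main f).
  - intros i _. apply Hlt, HVL, VK_P.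
  - intros k Hk. unfold allcons in Hk. destruct Hk as [Hk|Hk].
    + subst k. simpl. apply negb_true_iff, Nat.eqb_neq. auto.
    + apply in_app_or in Hk; destruct Hk as [Hk|Hk]; apply in_map_iff in Hk;
        destruct Hk as [x [Hx Hin]]; subst k.
      * destruct x as [u v]. simpl. apply negb_true_iff, Nat.eqb_neq.
        apply Hadj; try (apply HVL, VK_P). apply Hud, edge_sound.
        exact (proj1 (forallb_forall _ _) edges_ok _ Hin).
      * destruct x as [[[k a] b] l].
        pose proof (proj1 (forallb_forall _ _) copies_ok _ Hin) as Hc.
        pose proof (copy_sound _ _ _ _ Hc) as Hs.
        cbv beta iota delta [copy_okb] in Hc. apply andb_true_iff in Hc as [Hc _]. apply andb_true_iff in Hc as [Hc _].
        apply andb_true_iff in Hc as [Hl Hn]. apply Nat.eqb_eq in Hl. apply Z.leb_le in Hn.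
        simpl. apply goodg_of_nomono.
        intros [i [j [m [Hi [Hj [Hm [Hij [Hjm [Him [E1 E2]]]]]]]]]].
        apply (Hno (if k then (fun p => Tf (Rmap p)) else Tf) (lat a b)).
        -- destruct k; auto.
        -- exists a, b; reflexivity.
        -- rewrite norm_lat. apply IZR_le in Hn. exact Hn.
        -- exists i, j, m. rewrite !nth_map0 in E1, E2 by lia.
           assert (Hk : forall i, (i < 7)%nat -> col ((if k then (fun p => Tf (Rmap p)) else Tf) (Hvert (lat a b) i)) = f (nth i l 0%nat)).
           { intros i0 Hi0. unfold f. rewrite <- Hs by auto. destruct k; reflexivity. }
           repeat split; auto.
           ++ rewrite !Hk by auto. exact E1.
           ++ rewrite !Hk by auto. exact E2.
Qed.

Theorem mainTheorem5 :
  forall col : pt -> nat, proper4_L col ->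
  exists T c, In T placements /\ inLambda c /\ norm2 c <= 3 /\
    mono_triple col T c.
Proof.
  intros col [Hlt Hadj].
  destruct (classic (exists T c, In T placements /\ inLambda c /\ norm2 c <= 3 /\
    mono_triple col T c)) as [H|H]; [exact H|exfalso].
  assert (Hno : forall T c, In T placements -> inLambda c -> norm2 c <= 3 -> ~ mono_triple col T c).
  { intros T c h1 h2 h3 h4. apply H. exists T, c. auto. }
  assert (PA : P iA = A).
  { change (P iA) with (lat 2 0). unfold lat, A. f_equal; lra. }
  assert (PB : P iB = B).
  { change (P iB) with (lat (-2) 0). unfold lat, B. f_equal; lra. }
  assert (H1 : col (P iA) = col (P iB)).
  { apply (f_const col Hlt Hadj (fun p => p)); auto.
    - left; reflexivity.
    - right; left; reflexivity.
    - intros p Hp; left; exact Hp. }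
  assert (H2 : col (rho (P iA)) = col (rho (P iB))).
  { apply (f_const col Hlt Hadj rho); auto.
    - right; right; left; reflexivity.
    - right; right; right; left; reflexivity.
    - intros p Hp; right; exists p; auto.
    - apply unit_dist_rho. }
  rewrite PA, PB in H1, H2. rewrite rhoA in H2.
  apply (Hadj B (rho B)).
  - rewrite <- PB; left; apply VK_P.
  - right; exists B; split; [rewrite <- PB; apply VK_P | reflexivity].
  - apply unit_dist_B.
  - congruence.
Qed.
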